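(* Let $T$ be an invertible bilateral weighted (forward) shift on $\ell^2(\mathbb{Z})$, i.e. $Te_n=w_ne_{n+1}$ for $n\in\mathbb{Z}$ with weights satisfying $0<\inf_n|w_n|\le\sup_n|w_n|<\infty$, and let $B=T^{-1}$. Let $(n_k)_{k\in\mathbb{N}}$ be an increasing sequence of positive integers, and let $\mathcal{M}$ be the closed subspace of $\ell^2(\mathbb{Z})$ spanned by $\{e_{m_i}:i\in\mathbb{N}\}$ for some integers $m_i$, with $T^{n_k}\mathcal{M}\subseteq\mathcal{M}$ for all $k$. If $T^{n_k}e_{m_i}\to0$ as $k\to\infty$ for some $i$, then $T^{n_k}e_{m_r}\to0$ for all $r\in\mathbb{N}$. If $\|T^{n_k}e_{m_i}\|\,\|B^{n_k}e_{m_j}\|\to0$ as $k\to\infty$ for some $i,j$, then $\|T^{n_k}e_{m_r}\|\,\|B^{n_k}e_{m_p}\|\to0$ for all $r,p\in\mathbb{N}$.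
   Context: $(e_n)_{n\in\mathbb{Z}}$ is the canonical orthonormal basis of $\ell^2(\mathbb{Z})$. *)

(* Defs.v *)
From Stdlib Require Import Reals ZArith List ClassicalEpsilon.
Open Scope R_scope.

(** Complex numbers as pairs (re, im). *)
Definition Cpx := (R * R)%type.
Definition C0 : Cpx := (0, 0).
Definition C1 : Cpx := (1, 0).
Definition Cadd (a b : Cpx) : Cpx := (fst a + fst b, snd a + snd b).
Definition Copp (a : Cpx) : Cpx := (- fst a, - snd a).
Definition Cmul (a b : Cpx) : Cpx :=
  (fst a * fst b - snd a * snd b, fst a * snd b + snd a * fst b).
Definition Cmod (a : Cpx) : R := sqrt (fst a ^ 2 + snd a ^ 2).

Definition vec := Z -> Cpx.

(* |x_j|^2 + |x_{-j-1}|^2, j : nat, enumerates all coordinates *)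
Definition sqterm (x : vec) (j : nat) : R :=
  Cmod (x (Z.of_nat j)) ^ 2 + Cmod (x (- Z.of_nat j - 1)%Z) ^ 2.

Definition is_l2 (x : vec) : Prop := exists s, infinite_sum (sqterm x) s.

(* sum_{n in Z} |x_n|^2 (meaningful for x in ℓ²) *)
Definition l2sq (x : vec) : R :=
  epsilon (inhabits 0) (fun s => infinite_sum (sqterm x) s).

Definition l2norm (x : vec) : R := sqrt (l2sq x).

Definition vsub (x y : vec) : vec := fun z => Cadd (x z) (Copp (y z)).

Definition e (k : Z) : vec := fun z => if Z.eq_dec z k then C1 else C0.

(** Bilateral weighted forward shift: T e_n = w_n e_{n+1},
    i.e. (T x)_n = w_{n-1} x_{n-1}. *)
Definition wshift (w : Z -> Cpx) (x : vec) : vec :=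
  fun n => Cmul (w (n - 1)%Z) (x (n - 1)%Z).

Fixpoint lincomb (m : nat -> Z) (l : list (nat * Cpx)) : vec :=
  match l with
  | nil => fun _ => C0
  | (i, c) :: l' => fun z => Cadd (Cmul c (e (m i) z)) (lincomb m l' z)
  end.

Definition in_cspan (m : nat -> Z) (x : vec) : Prop :=
  is_l2 x /\
  forall eps, eps > 0 -> exists l : list (nat * Cpx), l2norm (vsub x (lincomb m l)) < eps.

Fixpoint opow (A : vec -> vec) (k : nat) (x : vec) : vec :=
  match k with O => x | S k' => A (opow A k' x) end.

(* Main.v *)
Require Import Defs.
From Stdlib Require Import Reals ZArith Lra Lia FunctionalExtensionality ClassicalEpsilon.
Open Scope R_scope.

Definition single (k:Z) (v:Cpx) : vec := fun z => if Z.eq_dec z k then v else C0.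

Lemma e_single k : e k = single k Defs.C1.
Proof. reflexivity. Qed.

Lemma Cmod_C0 : Cmod C0 = 0.
Proof. unfold Cmod, C0; simpl. replace (0*(0*1)+0*(0*1)) with 0 by ring. apply sqrt_0. Qed.

Lemma Cmod_C1 : Cmod Defs.C1 = 1.
Proof. unfold Cmod, Defs.C1; simpl. replace (1*(1*1)+0*(0*1)) with 1 by ring. apply sqrt_1. Qed.

Lemma Cmod_ge0 a : 0 <= Cmod a.
Proof. apply sqrt_pos. Qed.

Definition idx (k:Z) : nat := if Z_le_dec 0 k then Z.to_nat k else Z.to_nat (-k-1).

Lemma sq_single k v j : sqterm (single k v) j = if Nat.eq_dec j (idx k) then Cmod v ^2 else 0.
Proof.
  unfold sqterm, single, idx.
  destruct (Z_le_dec 0 k); destruct (Nat.eq_dec j _);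
  destruct (Z.eq_dec (Z.of_nat j) k); destruct (Z.eq_dec (- Z.of_nat j - 1)%Z k);
  try lia; rewrite ?Cmod_C0; ring.
Qed.

Lemma sum_one f j0 V : (forall j, f j = if Nat.eq_dec j j0 then V else 0) -> infinite_sum f V.
Proof.
  intros H.
  assert (S : forall n, sum_f_R0 f n = if le_dec j0 n then V else 0).
  { induction n; simpl.
    - rewrite H. destruct (Nat.eq_dec 0 j0); destruct (le_dec j0 0); try lia; auto.
    - rewrite IHn, H. destruct (Nat.eq_dec (S n) j0); destruct (le_dec j0 n);
      destruct (le_dec j0 (S n)); try lia; ring. }
  unfold infinite_sum; intros eps Heps. exists j0; intros n Hn.
  rewrite S. destruct (le_dec j0 n); [|lia]. unfold R_dist. replace (V - V) with 0 by ring.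
  rewrite Rabs_R0; lra.
Qed.

Lemma l2_single k v : l2norm (single k v) = Cmod v /\ is_l2 (single k v).
Proof.
  assert (Hs : infinite_sum (sqterm (single k v)) (Cmod v ^ 2)).
  { apply (sum_one _ (idx k)). apply sq_single. }
  split; [| exists (Cmod v ^2); auto].
  unfold l2norm, l2sq.
  pose proof (epsilon_spec (inhabits 0) (fun s => infinite_sum (sqterm (single k v)) s)
     (ex_intro _ _ Hs)) as He. simpl in He.
  rewrite (uniqueness_sum _ _ _ He Hs). apply sqrt_pow2, Cmod_ge0.
Qed.

Lemma Cmod_mul a b : Cmod (Cmul a b) = Cmod a * Cmod b.
Proof.
  destruct a as [x y], b as [p q]; unfold Cmod, Cmul; simpl.
  rewrite <- sqrt_mult by nra. f_equal. ring.
Qed.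

Definition Cinv (a : Cpx) : Cpx :=
  (fst a / (fst a^2 + snd a^2), - snd a / (fst a^2 + snd a^2)).

Lemma Cmul_inv a u : fst a ^2 + snd a^2 <> 0 -> Cmul a (Cmul (Cinv a) u) = u.
Proof. destruct a as [x y], u as [p q]; unfold Cmul, Cinv; simpl; intros H; f_equal; field; intro; apply H; ring_simplify; ring_simplify in H0; lra. Qed.

Lemma Cmul_inv2 a : fst a ^2 + snd a^2 <> 0 -> Cmul (Cinv a) a = Defs.C1.
Proof. destruct a as [x y]; unfold Cmul, Cinv, Defs.C1; simpl; intros H; f_equal; field; intro; apply H; ring_simplify; ring_simplify in H0; lra. Qed.

Lemma Cmod_nz a : Cmod a > 0 -> fst a ^2 + snd a^2 <> 0.
Proof. intros H H0. unfold Cmod in H. rewrite H0, sqrt_0 in H. lra. Qed.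

Lemma Cmul_C0 a : Cmul a C0 = C0.
Proof. destruct a; unfold Cmul, C0; simpl; f_equal; ring. Qed.

Lemma wshift_single w j u : wshift w (single j u) = single (j+1) (Cmul (w j) u).
Proof.
  apply functional_extensionality; intro z. unfold wshift, single.
  destruct (Z.eq_dec (z-1) j); destruct (Z.eq_dec z (j+1)); try lia.
  - subst. reflexivity.
  - apply Cmul_C0.
Qed.

Fixpoint tn (w : Z -> Cpx) (k : Z) (n : nat) : R :=
  match n with O => 1 | S n' => Cmod (w (k + Z.of_nat n')%Z) * tn w k n' end.

Lemma tn_ge0 w k n : 0 <= tn w k n.
Proof. induction n; simpl; [lra|]. pose proof (Cmod_ge0 (w (k + Z.of_nat n)%Z)); nra. Qed.

Lemma tn_shift w n : forall k, tn w k (S n) = tn w (k+1) n * Cmod (w k).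
Proof.
  induction n; intro k.
  - simpl. rewrite Z.add_0_r. ring.
  - change (tn w k (S (S n))) with (Cmod (w (k + Z.of_nat (S n))%Z) * tn w k (S n)).
    rewrite IHn.
    replace (k + Z.of_nat (S n))%Z with (k + 1 + Z.of_nat n)%Z by lia. simpl. ring.
Qed.

Lemma opow_T w n : forall k v, exists u,
  opow (wshift w) n (single k v) = single (k + Z.of_nat n) u /\ Cmod u = tn w k n * Cmod v.
Proof.
  induction n; intros k v.
  - exists v; simpl. rewrite Z.add_0_r. split; auto; ring.
  - destruct (IHn k v) as [u [H1 H2]]. exists (Cmul (w (k + Z.of_nat n)%Z) u).
    simpl. rewrite H1, wshift_single. split.
    + f_equal. lia.
    + rewrite Cmod_mul, H2. ring.
Qed.

Section S.
Variable w : Z -> Cpx.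
Variable c d : R.
Hypothesis hc : 0 < c.
Hypothesis hw : forall n, c <= Cmod (w n) <= d.
Variable B : vec -> vec.
Hypothesis hB : forall x, is_l2 x -> B (wshift w x) = x /\ wshift w (B x) = x.

Lemma wpos n : Cmod (w n) > 0.
Proof. destruct (hw n); lra. Qed.

Lemma B_single j u : B (single j u) = single (j-1) (Cmul (Cinv (w (j-1)%Z)) u).
Proof.
  set (x := single (j-1) (Cmul (Cinv (w (j-1)%Z)) u)).
  assert (Hx : wshift w x = single j u).
  { unfold x. rewrite wshift_single. rewrite Cmul_inv by (apply Cmod_nz, wpos).
    f_equal; lia. }
  rewrite <- Hx. apply hB. apply l2_single.
Qed.

Lemma opow_B n : forall k v, exists u,
  opow B n (single k v) = single (k - Z.of_nat n) u /\ Cmod u * tn w (k - Z.of_nat n) n = Cmod v.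
Proof.
  induction n; intros k v.
  - exists v; simpl. rewrite Z.sub_0_r. split; auto; ring.
  - destruct (IHn k v) as [u [H1 H2]].
    exists (Cmul (Cinv (w (k - Z.of_nat n - 1)%Z)) u).
    cbn [opow]. rewrite H1, B_single. split.
    + f_equal. lia.
    + rewrite tn_shift.
      replace (k - Z.of_nat (S n) + 1)%Z with (k - Z.of_nat n)%Z by lia.
      replace (k - Z.of_nat (S n))%Z with (k - Z.of_nat n - 1)%Z by lia.
      rewrite Cmod_mul, <- H2.
      pose proof (f_equal Cmod (Cmul_inv2 (w (k - Z.of_nat n - 1)%Z)
                   (Cmod_nz _ (wpos _)))) as E.
      rewrite Cmod_mul, Cmod_C1 in E.
      transitivity (Cmod u * tn w (k - Z.of_nat n) n *
        (Cmod (Cinv (w (k - Z.of_nat n - 1)%Z)) * Cmod (w (k - Z.of_nat n - 1)%Z))); [ring|].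
      rewrite E; ring.
Qed.

Lemma tn_pos k n : tn w k n > 0.
Proof. induction n; simpl; [lra|]. pose proof (wpos (k + Z.of_nat n)%Z); nra. Qed.

Definition K := d / c.

Lemma K_pos : K > 0.
Proof. unfold K. destruct (hw 0%Z). apply Rdiv_lt_0_compat; lra. Qed.

Lemma adj k n : tn w (k+1) n <= K * tn w k n /\ tn w k n <= K * tn w (k+1) n.
Proof.
  pose proof (tn_shift w n k) as E. simpl in E.
  pose proof (tn_ge0 w k n). pose proof (tn_ge0 w (k+1) n).
  destruct (hw k) as [a1 a2]. destruct (hw (k + Z.of_nat n)%Z) as [b1 b2].
  unfold K. split.
  - apply (Rmult_le_reg_r c); [lra|]. unfold Rdiv.
    replace (d * / c * tn w k n * c) with (d * tn w k n) by (field; lra). nra.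
  - apply (Rmult_le_reg_r c); [lra|]. unfold Rdiv.
    replace (d * / c * tn w (k+1) n * c) with (d * tn w (k+1) n) by (field; lra). nra.
Qed.

Lemma adjj (j : nat) : forall a n,
  tn w (a + Z.of_nat j) n <= K ^ j * tn w a n /\ tn w a n <= K ^ j * tn w (a + Z.of_nat j) n.
Proof.
  pose proof K_pos.
  induction j; intros a n.
  - simpl. rewrite Z.add_0_r. lra.
  - destruct (IHj a n) as [h1 h2].
    destruct (adj (a + Z.of_nat j) n) as [g1 g2].
    replace (a + Z.of_nat j + 1)%Z with (a + Z.of_nat (S j))%Z in g1, g2 by lia.
    change (K ^ S j) with (K * K ^ j). pose proof (pow_lt K j H). split.
    + apply (Rle_trans _ _ _ g1). rewrite Rmult_assoc. apply Rmult_le_compat_l; lra.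
    + apply (Rle_trans _ _ _ h2). rewrite (Rmult_comm K), Rmult_assoc.
      apply Rmult_le_compat_l; lra.
Qed.

Lemma ratio a b : exists C, C > 0 /\ forall n s, tn w (b + s) n <= C * tn w (a + s) n.
Proof.
  pose proof K_pos.
  destruct (Z_le_dec a b) as [Hab|Hab].
  - exists (K ^ Z.to_nat (b - a)). split; [apply pow_lt; auto|].
    intros n s. replace (b + s)%Z with (a + s + Z.of_nat (Z.to_nat (b-a)))%Z by lia.
    apply adjj.
  - exists (K ^ Z.to_nat (a - b)). split; [apply pow_lt; auto|].
    intros n s. replace (a + s)%Z with (b + s + Z.of_nat (Z.to_nat (a-b)))%Z by lia.
    apply adjj.
Qed.

End S.

Lemma squeeze (f g : nat -> R) C : C > 0 -> (forall n, 0 <= g n <= C * f n) ->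
  Un_cv f 0 -> Un_cv g 0.
Proof.
  intros HC Hg Hf eps Heps.
  destruct (Hf (eps / C)) as [N HN]. { apply Rdiv_lt_0_compat; lra. }
  exists N; intros n Hn. specialize (HN n Hn). specialize (Hg n).
  unfold R_dist in *. rewrite Rminus_0_r in *.
  rewrite Rabs_right by lra.
  apply (Rle_lt_trans _ (C * Rabs (f n))).
  - pose proof (Rle_abs (f n)); nra.
  - apply (Rmult_lt_compat_l C) in HN; auto.
    replace (C * (eps / C)) with eps in HN by (field; lra). lra.
Qed.

Theorem mainTheorem7
  (w : Z -> Cpx)
  (hw : exists c d, 0 < c /\ forall n, c <= Cmod (w n) <= d)
  (B : vec -> vec)
  (hB : forall x, is_l2 x -> B (wshift w x) = x /\ wshift w (B x) = x)
  (nk : nat -> nat)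
  (hpos : forall k, (0 < nk k)%nat)
  (hinc : forall k, (nk k < nk (S k))%nat)
  (m : nat -> Z)
  (hinv : forall k x, in_cspan m x -> in_cspan m (opow (wshift w) (nk k) x)) :
  ((exists i, Un_cv (fun k => l2norm (opow (wshift w) (nk k) (e (m i)))) 0) ->
     forall r, Un_cv (fun k => l2norm (opow (wshift w) (nk k) (e (m r)))) 0)
  /\
  ((exists i j, Un_cv (fun k => l2norm (opow (wshift w) (nk k) (e (m i)))
                               * l2norm (opow B (nk k) (e (m j)))) 0) ->
     forall r p, Un_cv (fun k => l2norm (opow (wshift w) (nk k) (e (m r)))
                               * l2norm (opow B (nk k) (e (m p)))) 0).
Proof.
  destruct hw as [c [d [hc hwn]]].
  assert (NT : forall k n, l2norm (opow (wshift w) n (e k)) = tn w k n).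
  { intros k n. rewrite e_single. destruct (opow_T w n k Defs.C1) as [u [H1 H2]].
    rewrite H1. rewrite (proj1 (l2_single _ _)), H2, Cmod_C1. ring. }
  assert (NB : forall k n, l2norm (opow B n (e k)) = / tn w (k - Z.of_nat n) n).
  { intros k n. rewrite e_single. destruct (opow_B w c d hc hwn B hB n k Defs.C1) as [u [H1 H2]].
    rewrite H1. rewrite (proj1 (l2_single _ _)). rewrite Cmod_C1 in H2.
    pose proof (tn_pos w c d hc hwn (k - Z.of_nat n) n).
    apply (Rmult_eq_reg_r (tn w (k - Z.of_nat n) n)); [|lra].
    rewrite H2. field. lra. }
  split.
  - intros [i Hi] r.
    destruct (ratio w c d hc hwn (m i) (m r)) as [C [HC HR]].
    eapply (squeeze _ _ C HC); [|exact Hi].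
    intro n. rewrite !NT. split; [apply tn_ge0|].
    specialize (HR (nk n) 0%Z). rewrite !Z.add_0_r in HR. exact HR.
  - intros [i [j Hij]] r p.
    destruct (ratio w c d hc hwn (m i) (m r)) as [Q1 [HQ1 HS1]].
    destruct (ratio w c d hc hwn (m p) (m j)) as [Q2 [HQ2 HS2]].
    eapply (squeeze _ _ (Q1 * Q2)); [nra| |exact Hij].
    intro n. rewrite !NT, !NB.
    specialize (HS1 (nk n) 0%Z). rewrite !Z.add_0_r in HS1.
    specialize (HS2 (nk n) (- Z.of_nat (nk n))%Z).
    replace (m j + - Z.of_nat (nk n))%Z with (m j - Z.of_nat (nk n))%Z in HS2 by lia.
    replace (m p + - Z.of_nat (nk n))%Z with (m p - Z.of_nat (nk n))%Z in HS2 by lia.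
    set (a := tn w (m r) (nk n)) in *.
    set (b := tn w (m i) (nk n)) in *.
    set (x := tn w (m p - Z.of_nat (nk n)) (nk n)) in *.
    set (y := tn w (m j - Z.of_nat (nk n)) (nk n)) in *.
    assert (0 <= a) by apply tn_ge0.
    assert (0 < x) by apply (tn_pos w c d hc hwn).
    assert (0 < y) by apply (tn_pos w c d hc hwn).
    split.
    + apply Rmult_le_pos; auto. left; apply Rinv_0_lt_compat; auto.
    + assert (/ x <= Q2 * / y).
      { apply (Rmult_le_reg_r (x * y)); [nra|].
        replace (/ x * (x * y)) with y by (field; lra).
        replace (Q2 * / y * (x * y)) with (Q2 * x) by (field; lra). lra. }
      assert (0 < / x) by (apply Rinv_0_lt_compat; auto).
      assert (0 < / y) by (apply Rinv_0_lt_compat; auto).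
      nra.
Qed.
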